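(* If $G$ is a $3$-edge-connected graph admitting a nowhere-zero $4$-flow, then $fn(G)\le 2$. In particular, $fn(G)=2$ for every $3$-edge-connected $3$-edge-colourable graph $G$.
   Context: All graphs are finite. An orientation is strong if for every ordered pair of distinct vertices $u,v$ there is a directed $uv$-path. An edge $e$ is deletable in an orientation $(G,o)$ if the restriction of $o$ to $E(G)\setminus\{e\}$ is a strong orientation of $G-e$. For a $3$-edge-connected graph $G$, the Frank number $fn(G)$ is the minimum number $k$ such that $G$ admits $k$ orientations with the property that every edge of $G$ is deletable in at least one of them. A nowhere-zero $k$-flow on $G$ is a pair $(o,f)$ of an orientation $o$ and a map $f:E(G)\to\{\pm1,\dots,\pm(k-1)\}$ such that at every vertex the sum of $f$ over incoming edges equals the sum of $f$ over outgoing edges. *)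

(* Defs.v *)
From mathcomp Require Import all_boot all_order all_algebra.
Set Implicit Arguments. Unset Strict Implicit. Unset Printing Implicit Defensive.
Import Order.TTheory GRing.Theory Num.Theory.

(* A finite multigraph (parallel edges and loops allowed) is given by a finite
   vertex type V, a finite edge type E and the two ends [s e], [t e] of every
   edge. *)

Definition ohead (V E : finType) (s t : E -> V) (o : E -> bool) (e : E) : V :=
  if o e then t e else s e.
Definition otail (V E : finType) (s t : E -> V) (o : E -> bool) (e : E) : V :=
  if o e then s e else t e.

Definition darc (V E : finType) (s t : E -> V) (F : {set E}) (o : E -> bool) : rel V :=
  fun x y => [exists e in F, (otail s t o e == x) && (ohead s t o e == y)].

Definition strong_on (V E : finType) (s t : E -> V) (F : {set E}) (o : E -> bool) : Prop :=
  forall u v : V, u != v -> connect (darc s t F o) u v.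

Definition deletable (V E : finType) (s t : E -> V) (o : E -> bool) (e : E) : Prop :=
  strong_on s t (setT :\ e) o.

Definition frank_cover (V E : finType) (s t : E -> V) (k : nat) : Prop :=
  exists os : 'I_k -> E -> bool, forall e : E, exists i : 'I_k, deletable s t (os i) e.

Definition uarc (V E : finType) (s t : E -> V) (F : {set E}) : rel V :=
  fun x y => [exists e in F, ((s e == x) && (t e == y)) || ((s e == y) && (t e == x))].

Definition edge_connected (V E : finType) (s t : E -> V) (k : nat) : Prop :=
  1 < #|V| /\
  forall F : {set E}, #|F| < k -> forall u v : V, connect (uarc s t (~: F)) u v.

Definition nz_flow (V E : finType) (s t : E -> V) (k : nat) : Prop :=
  exists (o : E -> bool) (f : E -> int),
    (forall e, f e != 0%R /\ (`|f e| < k%:Z)%R) /\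
    forall v : V, (\sum_(e | ohead s t o e == v) f e)%R = (\sum_(e | otail s t o e == v) f e)%R.

Definition edge_colourable (V E : finType) (s t : E -> V) (k : nat) : Prop :=
  exists c : E -> 'I_k,
    (forall e, s e != t e) /\
    forall e e' : E, e != e' ->
      [|| s e == s e', s e == t e', t e == s e' | t e == t e'] -> c e != c e'.

(* Main.v *)
Require Import Defs.
From mathcomp Require Import all_boot all_order all_algebra.
From mathcomp Require Import zify ring.
Set Implicit Arguments. Unset Strict Implicit. Unset Printing Implicit Defensive.
Import Order.TTheory GRing.Theory Num.Theory.

Section G.
Variables (V E : finType) (s t : E -> V).
Local Open Scope ring_scope.

Definition coef (o : E -> bool) (v : V) (e : E) : int :=
  (Defs.ohead s t o e == v)%:R - (otail s t o e == v)%:R.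
Definition bal o (h : E -> int) v := \sum_e coef o v e * h e.
Definition flip (b : E -> bool) (o : E -> bool) e := if b e then ~~ o e else o e.
Definition sg (b : E -> bool) (h : E -> int) e := if b e then - h e else h e.

Lemma bal_sg b o h v : bal o (sg b h) v = bal (flip b o) h v.
Proof.
apply: eq_bigr => e _; rewrite /coef /sg /flip /Defs.ohead /otail.
by case: (b e); case: (o e) => //=; rewrite mulrN -mulNr opprB.
Qed.

Lemma sgK b h e : sg b (sg b h) e = h e.
Proof. by rewrite /sg; case: (b e); rewrite ?opprK. Qed.

Lemma bal_lin o a b (x y : int) v :
  bal o (fun e => x * a e + y * b e) v = x * bal o a v + y * bal o b v.
Proof.
rewrite /bal !mulr_sumr -big_split; apply: eq_bigr => e _ /=; ring.
Qed.

Lemma bal_ext o a b v : (forall e, a e = b e) -> bal o a v = bal o b v.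
Proof. by move=> H; apply: eq_bigr => e _; rewrite H. Qed.

Lemma sum_ind (P : pred E) (h : E -> int) :
  \sum_e (P e)%:R * h e = \sum_(e | P e) h e.
Proof.
by rewrite [RHS]big_mkcond; apply: eq_bigr => e _; case: (P e); rewrite ?mul1r ?mul0r.
Qed.

Lemma flowE o h :
  (forall v, \sum_(e | Defs.ohead s t o e == v) h e = \sum_(e | otail s t o e == v) h e) ->
  forall v, bal o h v = 0.
Proof.
move=> H v; rewrite /bal /coef.
rewrite (eq_bigr (fun e => (Defs.ohead s t o e == v)%:R * h e - (otail s t o e == v)%:R * h e)); last by move=> e _; rewrite mulrBl.
by rewrite sumrB !sum_ind H subrr.
Qed.

Lemma sum_eqv (X : {set V}) a : \sum_(v in X) ((a == v)%:R : int) = (a \in X)%:R.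
Proof.
case: (boolP (a \in X)) => Ha.
  rewrite (bigD1 a) //= eqxx big1 ?addr0 // => v /andP[_].
  by rewrite eq_sym => /negbTE->.
by rewrite big1 // => v Hv; case: eqP => // Hav; subst; rewrite Hv in Ha.
Qed.

Lemma cutE o h (X : {set V}) : \sum_(v in X) bal o h v =
  \sum_e ((Defs.ohead s t o e \in X)%:R - (otail s t o e \in X)%:R) * h e.
Proof.
rewrite /bal exchange_big /=; apply: eq_bigr => e _.
by rewrite -mulr_suml /coef sumrB !sum_eqv.
Qed.

Lemma sum_card (P : pred E) : \sum_e ((P e)%:R : int) = (#|[set e | P e]|)%:R.
Proof.
rewrite -natr_sum; congr (_%:R).
rewrite (eq_bigr (fun e => if P e then 1 else 0)%N); last by move=> e _; case: (P e).
by rewrite -big_mkcond sum1_card; apply: eq_card => e; rewrite inE.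
Qed.


Lemma oh_ends o e : ((Defs.ohead s t o e == t e) && (otail s t o e == s e)) ||
                    ((Defs.ohead s t o e == s e) && (otail s t o e == t e)).
Proof. by rewrite /Defs.ohead /otail; case: (o e); rewrite !eqxx ?orbT. Qed.

Lemma cut_st o (X : {set V}) e :
  ((Defs.ohead s t o e \in X) != (otail s t o e \in X)) = ((s e \in X) != (t e \in X)).
Proof. by rewrite /Defs.ohead /otail; case: (o e) => //; rewrite eq_sym. Qed.

Lemma Del o h e0 : edge_connected s t 3 -> (forall v, bal o h v = 0) ->
  (forall e, 0 < h e) -> h e0 = 1 -> deletable s t o e0.
Proof.
move=> [_ Hc] Hf Hp H1 u v Huv.
apply/negPn/negP => Hn.
set R := darc s t (setT :\ e0) o.
set X := [set z | connect R u z].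
have clo : forall e, e != e0 -> otail s t o e \in X -> Defs.ohead s t o e \in X.
  move=> e He; rewrite !inE => Hu; apply: connect_trans Hu (connect1 _).
  by apply/existsP; exists e; rewrite !inE He !eqxx.
have memX : forall z, (z \in X) = connect R u z by move=> z; rewrite inE.
clearbody X.
set Fc := [set e | (Defs.ohead s t o e \in X) != (otail s t o e \in X)].
have HF : (3 <= #|Fc|)%N.
  rewrite leqNgt; apply/negP => /Hc /(_ u v) Hcon.
  have cl : closed (uarc s t (~: Fc)) X.
    move=> x y /existsP[e /andP[]]; rewrite in_setC /Fc inE cut_st negbK => /eqP Heq.
    by case/orP => /andP[/eqP<- /eqP<-].
  move: (closed_connect cl Hcon); rewrite !memX connect0 => /esym Hv.
  by rewrite Hv in Hn.
set In := [set e | (Defs.ohead s t o e \in X) && (otail s t o e \notin X)].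
have Hsub : Fc \subset e0 |: In.
  apply/subsetP => e; rewrite !inE.
  case: (boolP (e == e0)) => //= He.
  case Ht: (otail s t o e \in X); case Hh: (Defs.ohead s t o e \in X) => //=.
  by rewrite clo in Hh.
have HIn : (2 <= #|In|)%N.
  have := subset_leq_card Hsub; rewrite cardsU1; move: HF; case: (e0 \in In) => /=; lia.
have key : forall e, ((e \in In)%:R - (e == e0)%:R : int) <=
    ((Defs.ohead s t o e \in X)%:R - (otail s t o e \in X)%:R) * h e.
  move=> e; rewrite inE; have := Hp e; have := clo e.
  case: (Defs.ohead s t o e \in X); case: (otail s t o e \in X);
    case: eqP => [->|ne] /=; rewrite ?H1 => //; try lia.
have : \sum_e ((e \in In)%:R - (e == e0)%:R : int) <=
   \sum_e ((Defs.ohead s t o e \in X)%:R - (otail s t o e \in X)%:R) * h e.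
  by apply: ler_sum => e _; exact: key.
rewrite -cutE.
have -> : \sum_(v in X) bal o h v = 0 by apply: big1 => w _; exact: Hf.
rewrite sumrB sum_card.
have -> : \sum_e ((e == e0)%:R : int) = 1.
  rewrite (bigD1 e0) //= eqxx big1 ?addr0 // => i /negbTE -> //.
have -> : [set e | e \in In] = In by apply/setP => e; rewrite inE.
lia.
Qed.

Lemma DelS o h e0 : edge_connected s t 3 -> (forall v, bal o h v = 0) ->
  (forall e, h e != 0) -> (h e0 = 1 \/ h e0 = -1) ->
  deletable s t (flip (fun e => h e < 0) o) e0.
Proof.
move=> Hc Hf Hnz H1; apply: (Del (h := sg (fun e => h e < 0) h)) => //.
- by move=> v; rewrite -bal_sg -(Hf v); apply: bal_ext => e; exact: sgK.
- by move=> e; rewrite /sg; have := Hnz e; case: ifP => H; lia.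
- by rewrite /sg; case: H1 => ->.
Qed.

Lemma Core o (pa pb : E -> int) : edge_connected s t 3 ->
  (forall v, bal o pa v = 0) -> (forall v, bal o pb v = 0) ->
  (forall e, -1 <= pa e <= 1) -> (forall e, -1 <= pb e <= 1) ->
  (forall e, pa e != 0 \/ pb e != 0) -> frank_cover s t 2.
Proof.
move=> Hc Fa Fb Ba Bb Hn.
pose h1 e := 1 * pa e + 2 * pb e.
pose h2 e := 1 * pb e + (-2) * pa e.
have F1 : forall v, bal o h1 v = 0 by move=> v; rewrite bal_lin Fa Fb; ring.
have F2 : forall v, bal o h2 v = 0 by move=> v; rewrite bal_lin Fa Fb; ring.
exists (fun i : 'I_2 => if i == ord0 then flip (fun e => h1 e < 0) o
                         else flip (fun e => h2 e < 0) o).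
move=> e.
have := Ba e; have := Bb e; have := Hn e => He Hb Ha.
case: (boolP ((h1 e == 1) || (h1 e == -1))) => H.
  exists ord0; rewrite eqxx; apply: DelS => //.
    by move=> x; have := Ba x; have := Bb x; have := Hn x; rewrite /h1; lia.
  by move: H; rewrite /h1; lia.
exists ord_max => /=; apply: DelS => //.
  by move=> x; have := Ba x; have := Bb x; have := Hn x; rewrite /h2; lia.
by move: H; rewrite /h1 /h2; lia.
Qed.

Section Cyc.
Variables (o : E -> bool) (A : {set E}) (e0 : E).

Definition rr : rel V := fun a b => [exists e, [&& e \in A, e != e0 &
   ((s e == a) && (t e == b)) || ((s e == b) && (t e == a))]].
Definition pk a b : E := odflt e0 [pick e | [&& e \in A, e != e0 &
   ((s e == a) && (t e == b)) || ((s e == b) && (t e == a))]].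

Lemma pkP a b : rr a b -> [&& pk a b \in A, pk a b != e0 &
   ((s (pk a b) == a) && (t (pk a b) == b)) || ((s (pk a b) == b) && (t (pk a b) == a))].
Proof.
rewrite /pk; case: pickP => [e He|H] /=; first by [].
by move=> /existsP[e]; rewrite H.
Qed.

Definition sgn (e : E) a : int := if otail s t o e == a then 1 else -1.

Lemma coef_dir e a b v : ((s e == a) && (t e == b)) || ((s e == b) && (t e == a)) ->
  coef o v e * sgn e a = (b == v)%:R - (a == v)%:R.
Proof.
rewrite /coef /sgn /Defs.ohead /otail => /orP[]/andP[/eqP<- /eqP<-].
  case: (s e =P t e) => [->|ne]; first by case: (o e); rewrite ?eqxx subrr mul0r.
  case: (o e) => /=; rewrite ?eqxx; first by rewrite mulr1.
  have /negbTE-> : t e != s e by apply/eqP => H; apply: ne.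
  by rewrite mulrN1 opprB.
case: (s e =P t e) => [->|ne]; first by case: (o e); rewrite ?eqxx subrr mul0r.
case: (o e) => /=; rewrite ?eqxx; last by rewrite mulr1.
have /negbTE-> : s e != t e by apply/eqP.
by rewrite mulrN1 opprB.
Qed.

Fixpoint cyc (a : V) (p : seq V) (e : E) : int :=
  if p is b :: p' then (pk a b == e)%:R * sgn (pk a b) a + cyc b p' e else 0.

Lemma cyc_bal a p v : path rr a p ->
  \sum_e coef o v e * cyc a p e = (last a p == v)%:R - (a == v)%:R.
Proof.
elim: p a => [|b p IH] a /=.
  by move=> _; rewrite big1 ?subrr // => e _; rewrite mulr0.
move=> /andP[Hab Hp].
rewrite (eq_bigr (fun e => (pk a b == e)%:R * (coef o v (pk a b) * sgn (pk a b) a)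
     + coef o v e * cyc b p e)); last first.
  by move=> e _; case: eqP => [->|_]; rewrite ?mul1r ?mul0r; ring.
rewrite big_split /= IH // (bigD1 (pk a b)) //= eqxx mul1r big1 ?addr0; last first.
  by move=> e /negbTE; rewrite eq_sym => ->; rewrite mul0r.
have := pkP Hab => /and3P[_ _ H].
rewrite (coef_dir v H); ring.
Qed.

Lemma cyc_zero a p e : path rr a p -> (s e \notin a :: p) || (t e \notin a :: p) ->
  cyc a p e = 0.
Proof.
elim: p a => [|b p IH] a //= /andP[Hab Hp] H.
case: (boolP (pk a b == e)) => Hpk.
  have := pkP Hab; rewrite (eqP Hpk) => /and3P[_ _ /orP[]/andP[/eqP Hs /eqP Ht]];
  by move: H; rewrite !in_cons Hs Ht !eqxx ?orbT.
rewrite mul0r add0r IH //.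
by case/orP: H; rewrite in_cons negb_or => /andP[_ ->] //; rewrite orbT.
Qed.

Lemma cyc_val a p e : path rr a p -> uniq (a :: p) ->
  cyc a p e = 0 \/ ((cyc a p e = 1 \/ cyc a p e = -1) /\ e \in A /\ e != e0).
Proof.
elim: p a => [|b p IH] a /=; first by left.
move=> /andP[Hab Hp] /andP[Ha Hu].
case: (boolP (pk a b == e)) => Hpk.
  have := pkP Hab; rewrite (eqP Hpk) => /and3P[HA He0 Hst].
  rewrite (@cyc_zero b p e) //; last first.
    by case/orP: Hst => /andP[/eqP-> /eqP->]; rewrite Ha ?orbT.
  right; split => //; rewrite /sgn; case: ifP => _ /=; [left|right]; ring.
by rewrite mul0r add0r; exact: IH.
Qed.

End Cyc.

Lemma even_case o (g : E -> int) : (forall e, ~~ odd (absz (g e))) ->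
  exists pa k : E -> int, (forall v, bal o pa v = 0) /\ (forall e, -1 <= pa e <= 1)
     /\ (forall e, g e = pa e + 2 * k e).
Proof.
move=> H; exists (fun _ => 0), (fun e => (g e %/ 2)%Z); split.
  by move=> v; apply: big1 => e _; rewrite mulr0.
by split => // e; have := H e; lia.
Qed.

Lemma Lift2 n : forall o (g : E -> int),
  (#|[set e | odd (absz (g e))]| <= n)%N -> (forall v, (2 %| bal o g v)%Z) ->
  exists pa k : E -> int, (forall v, bal o pa v = 0) /\ (forall e, -1 <= pa e <= 1)
     /\ (forall e, g e = pa e + 2 * k e).
Proof.
elim: n => [|n IH] o g Hn Hev.
  apply: even_case => e; apply/negP => He.
  have : e \in [set e | odd (absz (g e))] by rewrite inE.
  by move: Hn; rewrite leqn0 => /eqP/cards0_eq ->; rewrite inE.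
set A := [set e | odd (absz (g e))] in Hn *.
case: (set_0Vmem A) => [A0|[e0 He0]].
  apply: even_case => e; apply/negP => He.
  have : e \in A by rewrite inE.
  by rewrite A0 inE.
have Hcon : connect (rr A e0) (t e0) (s e0).
  apply/negPn/negP => Hn'.
  set X := [set z | connect (rr A e0) (t e0) z].
  have memX : forall z, (z \in X) = connect (rr A e0) (t e0) z by move=> z; rewrite inE.
  clearbody X.
  have clo : forall e, e \in A -> e != e0 -> (s e \in X) = (t e \in X).
    move=> e HA He; rewrite !memX; apply/idP/idP => H; apply: connect_trans H (connect1 _);
      by apply/existsP; exists e; rewrite HA He !eqxx ?orbT.
  have Hy : t e0 \in X by rewrite memX connect0.
  have Hx : s e0 \notin X by rewrite memX.
  have Hs : (2 %| \sum_(v in X) bal o g v)%Z by apply: rpred_sum => v _; exact: Hev.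
  rewrite cutE (bigD1 e0) //= in Hs.
  have Hr : (2 %| \sum_(e | e != e0)
      ((Defs.ohead s t o e \in X)%:R - (otail s t o e \in X)%:R) * g e)%Z.
    apply: rpred_sum => e He; case: (boolP (e \in A)) => HA.
      have := clo e HA He; have := oh_ends o e.
      by case/orP => /andP[/eqP-> /eqP->] ->; rewrite subrr mul0r.
    move: HA; rewrite inE.
    by case: (_ \in X); case: (_ \in X) => /=; lia.
  have HA0 : odd (absz (g e0)) by move: He0; rewrite inE.
  move: Hs Hr; set S := \sum_(i | i != e0) _; have := oh_ends o e0.
  case/orP => /andP[/eqP-> /eqP->]; rewrite Hy (negbTE Hx) /=; lia.
have [p' [Hp' [Hu Hl]]] : exists p', [/\ path (rr A e0) (t e0) p',
    uniq (t e0 :: p') & last (t e0) p' = s e0].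
  case/connectP: Hcon => p Hp ->; case/shortenP: Hp => p' Hp' Hu _.
  by exists p'.
pose chi e := (e == e0)%:R * sgn o e0 (s e0) + cyc o A e0 (t e0) p' e.
have Fchi : forall v, bal o chi v = 0.
  move=> v; rewrite /bal.
  rewrite (eq_bigr (fun e => (e == e0)%:R * (coef o v e0 * sgn o e0 (s e0))
     + coef o v e * cyc o A e0 (t e0) p' e)); last first.
    by move=> e _; rewrite /chi; case: eqP => [->|_]; rewrite ?mul1r ?mul0r; ring.
  rewrite big_split /= cyc_bal // Hl (bigD1 e0) //= eqxx mul1r big1 ?addr0; last first.
    by move=> e /negbTE ->; rewrite mul0r.
  rewrite (coef_dir _ v (a := s e0) (b := t e0)) ?eqxx //; ring.
have Hchi : forall e, chi e = 0 \/ ((chi e = 1 \/ chi e = -1) /\ odd (absz (g e))).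
  move=> e; rewrite /chi; case: (boolP (e == e0)) => [/eqP->|ne].
    case: (@cyc_val o A e0 (t e0) p' e0 Hp' Hu) => [->|[_ [_ /negP]]]; last by rewrite eqxx.
    right; split; last by move: He0; rewrite inE.
    by rewrite /sgn; case: ifP => _ /=; [left|right]; ring.
  case: (@cyc_val o A e0 (t e0) p' e Hp' Hu) => [->|[H [HA _]]].
    by left; rewrite /= mul0r addr0.
  right; split; last by move: HA; rewrite inE.
  by rewrite /= mul0r add0r.
have Hchi0 : chi e0 = 1 \/ chi e0 = -1.
  rewrite /chi eqxx; case: (@cyc_val o A e0 (t e0) p' e0 Hp' Hu) => [->|[_ [_ /negP]]];
    last by rewrite eqxx.
  by rewrite /sgn; case: ifP => _ /=; [left|right]; ring.
pose g' e := 1 * g e + (-1) * chi e.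
have Hev' : forall v, (2 %| bal o g' v)%Z.
  by move=> v; rewrite bal_lin Fchi; have := Hev v; lia.
have Hcard : (#|[set e | odd (absz (g' e))]| <= n)%N.
  rewrite -ltnS; apply: leq_trans Hn; apply: proper_card; apply/properP; split.
    apply/subsetP => e; rewrite !inE /g'; case: (Hchi e); lia.
  exists e0 => //; rewrite inE /g'; move: He0; rewrite inE.
  case: Hchi0; lia.
have [pa [k [Fa [Ba Ka]]]] := IH o g' Hcard Hev'.
exists (fun e => 1 * pa e + 1 * chi e), k; split.
  by move=> v; rewrite bal_lin Fa Fchi; ring.
split => e; have := Ka e; have := Ba e; rewrite /g'; case: (Hchi e); lia.
Qed.

Lemma Part1 : edge_connected s t 3 -> nz_flow s t 4 -> frank_cover s t 2.
Proof.
move=> Hc [o [f [Hnz Hfl]]].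
have Ff := flowE Hfl.
have [pa [ka [Fa [Ba Ka]]]] := @Lift2 #|E| o f (max_card _)
   (fun v => etrans (congr1 _ (Ff v)) isT).
have Fk : forall v, bal o ka v = 0.
  move=> v; have : bal o f v = bal o (fun e => 1 * pa e + 2 * ka e) v.
    by apply: bal_ext => e; rewrite Ka; ring.
  rewrite bal_lin Fa Ff; lia.
have [pb [kb [Fb [Bb Kb]]]] := @Lift2 #|E| o ka (max_card _)
   (fun v => etrans (congr1 _ (Fk v)) isT).
apply: (Core Hc Fa Fb Ba Bb) => e.
have := Hnz e; have := Ka e; have := Kb e; lia.
Qed.

Definition Iv v := [set e | (s e == v) || (t e == v)].

Lemma other_vertex : (1 < #|V|)%N -> forall v : V, exists u, u != v.
Proof.
move=> HV v; move: HV; rewrite (cardD1 v) inE add1n ltnS => /card_gt0P [u].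
by rewrite !inE => /andP[Hu _]; exists u.
Qed.

Lemma degge3 : edge_connected s t 3 -> forall v, (3 <= #|Iv v|)%N.
Proof.
move=> [HV Hc] v; rewrite leqNgt; apply/negP => /Hc H.
have [u Hu] := other_vertex HV v.
have cl : closed (uarc s t (~: Iv v)) [set v].
  move=> x y /existsP[e /andP[]]; rewrite in_setC /Iv inE negb_or => /andP[Hs Ht].
  case/orP => /andP[/eqP<- /eqP<-]; rewrite !inE; by rewrite (negbTE Hs) (negbTE Ht).
have := closed_connect cl (H u v); rewrite !inE eqxx (negbTE Hu); done.
Qed.

Section Col.
Variable c : E -> 'I_3.
Hypothesis Hloop : forall e, s e != t e.
Hypothesis Hadj : forall e e' : E, e != e' ->
      [|| s e == s e', s e == t e', t e == s e' | t e == t e'] -> c e != c e'.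
Hypothesis Hc3 : edge_connected s t 3.

Lemma cinj v : {in Iv v &, injective c}.
Proof.
move=> e e'; rewrite !inE => He He' Hce; apply/eqP; apply/negP => /negP Hne.
have Ha : [|| s e == s e', s e == t e', t e == s e' | t e == t e'].
  by case/orP: He => /eqP->; case/orP: He' => /eqP->; rewrite eqxx ?orbT.
by have := Hadj Hne Ha; rewrite Hce eqxx.
Qed.

Lemma cimT v : c @: Iv v = setT.
Proof.
apply/eqP; rewrite eqEcard subsetT cardsT card_ord card_in_imset; first exact: degge3.
exact: cinj.
Qed.

Lemma edge_col v i : exists2 e, e \in Iv v & c e = i.
Proof.
have : i \in c @: Iv v by rewrite cimT inE.
by case/imsetP => e He ->; exists e.
Qed.

Lemma colour_card (S : {set 'I_3}) v :
  #|[set e | (e \in Iv v) && (c e \in S)]| = #|S|.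
Proof.
rewrite -(card_in_imset (f := c)); last first.
  move=> e e'; rewrite !inE => /andP[He _] /andP[He' _].
  have HeI : e \in Iv v by rewrite inE.
  have HeI' : e' \in Iv v by rewrite inE.
  exact: (cinj HeI HeI').
apply: eq_card => i; apply/imsetP/idP.
  by case=> e; rewrite inE => /andP[_ H] ->.
move=> Hi; have [e He Hce] := edge_col v i.
by exists e; rewrite // inE He Hce Hi.
Qed.

Lemma col_even o (S : {set 'I_3}) v : #|S| = 2%N ->
  (2 %| bal o (fun e => (c e \in S)%:R) v)%Z.
Proof.
move=> HS.
have H1 : (2 %| bal o (fun e => (c e \in S)%:R) v -
            \sum_e (((e \in Iv v) && (c e \in S))%:R : int))%Z.
  rewrite /bal -sumrB; apply: rpred_sum => e _.
  rewrite /coef /Defs.ohead /otail inE.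
  have := Hloop e.
  case Hs: (s e == v); case Ht: (t e == v);
    try (by move: Hs Ht => /eqP-> /eqP->; rewrite eqxx);
    case: (o e); case: (c e \in S) => /=; rewrite ?Hs ?Ht /=; lia.
move: H1; rewrite sum_card colour_card HS; lia.
Qed.

Lemma Part2a : frank_cover s t 2.
Proof.
pose o := fun _ : E => true.
pose SA := [set~ (ord_max : 'I_3)].
pose SB := [set~ (ord0 : 'I_3)].
have cA : #|SA| = 2%N by rewrite cardsC1 card_ord.
have cB : #|SB| = 2%N by rewrite cardsC1 card_ord.
have [pa [ka [Fa [Ba Ka]]]] := @Lift2 #|E| o _ (max_card _) (fun v => col_even o v cA).
have [pb [kb [Fb [Bb Kb]]]] := @Lift2 #|E| o _ (max_card _) (fun v => col_even o v cB).
apply: (Core Hc3 Fa Fb Ba Bb) => e.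
have := Ka e; have := Kb e; rewrite !inE.
case: (c e =P ord_max) => [->|_] /=; first by lia.
case: (c e \in SA); lia.
Qed.

Lemma I3 (i : 'I_3) : i = @Ordinal 3 0 isT \/ i = @Ordinal 3 1 isT \/ i = @Ordinal 3 2 isT.
Proof.
case: i => [[|[|[|m]]] Hm]; [left|right;left|right;right|by []]; exact: val_inj.
Qed.

Lemma three (f : 'I_3 -> bool) :
  (exists j, forall i, f i -> i = j) \/ (exists j, forall i, ~~ f i -> i = j).
Proof.
set o0 := @Ordinal 3 0 isT; set o1 := @Ordinal 3 1 isT; set o2 := @Ordinal 3 2 isT.
case E0: (f o0); case E1: (f o1); case E2: (f o2);
 [right; exists o0 | right; exists o2 | right; exists o1 | left; exists o0
 | right; exists o0 | left; exists o1 | left; exists o2 | left; exists o0];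
 move=> i; case: (I3 i) => [->|[->|->]]; rewrite ?E0 ?E1 ?E2 //.
Qed.

Lemma Part2b k : (k < 2)%N -> ~ frank_cover s t k.
Proof.
move=> Hk [os H].
have [HV _] := Hc3.
have /card_gt0P [v _] := ltnW HV.
have [a Ha] : exists a : 'I_3 -> E, forall i, a i \in Iv v /\ c (a i) = i.
  apply: (@fin_all_exists 'I_3 (fun _ => E) (fun i e => e \in Iv v /\ c e = i)) => i.
  by have [e He Hce] := edge_col v i; exists e.
have uniq_a : forall e, e \in Iv v -> e = a (c e).
  move=> e He; apply: (cinj He (Ha (c e)).1); by rewrite (Ha (c e)).2.
case: k Hk os H => [|[|//]] _ os H.
  by have [[m Hm] _] := H (a ord0).
pose o := os ord0.
have Hd : forall e, deletable s t o e.
  by move=> e; have [i Hi] := H e; rewrite (ord1 i) in Hi.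
have [u Hu] := other_vertex HV v.
case: (three (fun i => otail s t o (a i) == v)) => [[j Hj]|[j Hj]].
  have := Hd (a j) v u; rewrite eq_sym => /(_ Hu).
  case/connectP => [[|w p]] /= Hp Hl; first by rewrite Hl eqxx in Hu.
  case/andP: Hp => /existsP[e /andP[HeF /andP[/eqP Ht _]]] _.
  have HeI : e \in Iv v.
    rewrite inE; have := oh_ends o e; rewrite Ht.
    by case/orP => /andP[_ /eqP Hv]; rewrite Hv eqxx ?orbT.
  have Heq := uniq_a e HeI.
  have Hcj : c e = j by apply: Hj; rewrite -Heq Ht.
  by move: HeF; rewrite !inE Heq Hcj eqxx.
have := Hd (a j) u v Hu.
case/connectP => p Hp Hl; case/lastP: p Hp Hl => [|q w] Hp Hl.
  by rewrite /= Hl eqxx in Hu.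
rewrite rcons_path last_rcons in Hp Hl.
case/andP: Hp => _ /existsP[e /andP[HeF /andP[_ /eqP Hh]]].
rewrite -Hl in Hh.
have HeI : e \in Iv v.
  rewrite inE; have := oh_ends o e; rewrite Hh.
  by case/orP => /andP[/eqP Hv _]; rewrite Hv eqxx ?orbT.
have Hot : otail s t o e != v.
  have := Hloop e; have := oh_ends o e; rewrite Hh.
  case/orP => /andP[/eqP Hv /eqP ->]; rewrite Hv //.
  by rewrite eq_sym.
have Heq := uniq_a e HeI.
have Hcj : c e = j by apply: Hj; rewrite -Heq.
by move: HeF; rewrite !inE Heq Hcj eqxx.
Qed.

End Col.

End G.

Theorem theorem2 :
  (forall (V E : finType) (s t : E -> V),
     edge_connected s t 3 -> nz_flow s t 4 ->
     exists k, k <= 2 /\ frank_cover s t k) /\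
  (forall (V E : finType) (s t : E -> V),
     edge_connected s t 3 -> edge_colourable s t 3 ->
     frank_cover s t 2 /\ forall k, k < 2 -> ~ frank_cover s t k).
Proof.
split.
  by move=> V E s t Hc Hf; exists 2; split => //; exact: Part1.
move=> V E s t Hc [c [Hl Ha]]; split.
  exact: (Part2a Hl Ha Hc).
exact: (Part2b Hl Ha Hc).
Qed.
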